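(* For conjunctive guarded systems of type $(A,B)$ and every LTL formula without the next operator $h(A,B_1)$: for all $n\ge2$, if some unconditionally fair initializing run of $(A,B)^{(1,n)}$ satisfies $h(A,B_1)$, then some unconditionally fair initializing run of $(A,B)^{(1,n+1)}$ satisfies $h(A,B_1)$.
   Context: A process template is $U=(Q_U,\mathit{init}_U,\Sigma_U,\delta_U)$ with finite states $Q_U$, initial state $\mathit{init}_U$, finite input alphabet $\Sigma_U$ and guarded transitions $\delta_U\subseteq Q_U\times\Sigma_U\times 2^{Q_A\cup Q_B}\times Q_U$; templates $A,B$ have disjoint state sets and disjoint alphabets. The system $(A,B)^{(1,n)}$ consists of one copy of $A$ and $n$ copies $B_1,\dots,B_n$ of $B$; a global state $s$ gives each process a local state, a global input $e$ gives each process an input letter, and initially all processes are in their initial states. In a conjunctive system a guard $g$ is satisfied for process $p$ in $s$ iff every process $p'\ne p$ has $s(p')\in g$, and $\mathit{init}_A,\mathit{init}_B$ belong to every guard. A local transition $(q,\sigma,g,q')$ of $p$ is enabled for $(s,e)$ if $s(p)=q$, $e(p)=\sigma$ and $g$ is satisfied for $p$ in $s$; a global step changes the state of exactly one process along an enabled transition. A path is a sequence of configurations $(s_1,e_1,p_1),(s_2,e_2,p_2),\dots$ where $p_t$ makes the step from $s_t$ to $s_{t+1}$ under $e_t$, a configuration $(s,e,\bot)$ occurs (as the last one) exactly when all processes are disabled, and $e_{t+1}(p)=e_t(p)$ for every process $p$ not moving at moment $t$. A run is a maximal path from the initial state. A run is unconditionally fair if it is infinite and every process moves infinitely often; it is initializing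 if every process that moves infinitely often visits its template's initial state infinitely often. $h(A,B_1)$ is an LTL formula without next operator over atomic propositions from $Q_A\cup\Sigma_A$ and $(Q_B\cup\Sigma_B)\times\{1\}$, interpreted on the local states and inputs of $A$ and $B_1$ along the run. *)

(* Defs.v *)
From mathcomp Require Import all_boot.
Set Implicit Arguments. Unset Strict Implicit. Unset Printing Implicit Defensive.

(* State sets and alphabets are finite
   types; disjointness of Q_A/Q_B and Sigma_A/Sigma_B is built in since they
   are distinct types and guards live in {set (QA + QB)} (disjoint union). *)
Record templates := Templates {
  QA : finType; QB : finType; SA : finType; SB : finType;
  initA : QA; initB : QB;
  deltaA : {set (QA * SA * {set (QA + QB)} * QA)};
  deltaB : {set (QB * SB * {set (QA + QB)} * QB)} }.

Section Sys.
Variable T : templates.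
Local Notation QA := (QA T). Local Notation QB := (QB T).
Local Notation SA := (SA T). Local Notation SB := (SB T).

Definition conjunctive : Prop :=
  (forall q s g q', (q, s, g, q') \in deltaA T ->
      inl (initA T) \in g /\ inr (initB T) \in g) /\
  (forall q s g q', (q, s, g, q') \in deltaB T ->
      inl (initA T) \in g /\ inr (initB T) \in g).

(* (A,B)^(1,n): process None = A, process Some i = B_(i+1) *)
Definition proc (n : nat) := option 'I_n.
Definition gstate (n : nat) := (QA * {ffun 'I_n -> QB})%type.
Definition ginput (n : nat) := (SA * {ffun 'I_n -> SB})%type.

Definition loc n (s : gstate n) (p : proc n) : QA + QB :=
  match p with None => inl s.1 | Some i => inr (s.2 i) end.
Definition linp n (e : ginput n) (p : proc n) : SA + SB :=
  match p with None => inl e.1 | Some i => inr (e.2 i) end.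
Definition linit n (p : proc n) : QA + QB :=
  match p with None => inl (initA T) | Some _ => inr (initB T) end.

Definition init_state n : gstate n := (initA T, [ffun => initB T]).

Definition guard_sat n (s : gstate n) (p : proc n) (g : {set (QA + QB)}) : Prop :=
  forall p', p' <> p -> loc s p' \in g.

Definition step n (s : gstate n) (e : ginput n) (p : proc n) (s' : gstate n) : Prop :=
  match p with
  | None => exists q sg g q', (q, sg, g, q') \in deltaA T /\ s.1 = q /\ e.1 = sg
              /\ guard_sat s None g /\ s' = (q', s.2)
  | Some i => exists q sg g q', (q, sg, g, q') \in deltaB T /\ s.2 i = q /\ e.2 i = sg
              /\ guard_sat s (Some i) g
              /\ s' = (s.1, [ffun j => if j == i then q' else s.2 j])
  end.

(* An infinite run: the sequence of configurations (s_t, e_t, p_t), t = 0,1,...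
   (no bottom configuration occurs in an infinite run). *)
Record inf_run (n : nat) := InfRun {
  rs : nat -> gstate n;
  re : nat -> ginput n;
  rp : nat -> proc n }.

Definition is_inf_run n (r : inf_run n) : Prop :=
  rs r 0 = init_state n /\
  (forall t, step (rs r t) (re r t) (rp r t) (rs r t.+1)) /\
  (forall t p, p <> rp r t -> linp (re r t.+1) p = linp (re r t) p).

Definition moves_inf_often n (r : inf_run n) (p : proc n) : Prop :=
  forall t, exists t', t <= t' /\ rp r t' = p.

Definition uncond_fair n (r : inf_run n) : Prop :=
  is_inf_run r /\ forall p, moves_inf_often r p.

Definition initializing n (r : inf_run n) : Prop :=
  forall p, moves_inf_often r p ->
    forall t, exists t', t <= t' /\ loc (rs r t') p = linit p.

Inductive atom := AtQA of QA | AtSA of SA | AtQB1 of QB | AtSB1 of SB.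

Inductive ltl :=
  | LTrue
  | LAtom of atom
  | LNot of ltl
  | LAnd of ltl & ltl
  | LUntil of ltl & ltl.

Definition obs := (QA * SA * QB * SB)%type.

Definition atom_holds (o : obs) (a : atom) : Prop :=
  match a with
  | AtQA q => o.1.1.1 = q
  | AtSA x => o.1.1.2 = x
  | AtQB1 q => o.1.2 = q
  | AtSB1 x => o.2 = x
  end.

Fixpoint ltl_sat (w : nat -> obs) (t : nat) (f : ltl) : Prop :=
  match f with
  | LTrue => True
  | LAtom a => atom_holds (w t) a
  | LNot f1 => ~ ltl_sat w t f1
  | LAnd f1 f2 => ltl_sat w t f1 /\ ltl_sat w t f2
  | LUntil f1 f2 => exists k, t <= k /\ ltl_sat w k f2 /\
                      forall j, t <= j < k -> ltl_sat w j f1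
  end.

Definition run_obs n (r : inf_run n) (i : 'I_n) : nat -> obs :=
  fun t => ((rs r t).1, (re r t).1, (rs r t).2 i, (re r t).2 i).

(* the run satisfies h(A,B_1); B_1 is the B-process with index 0 *)
Definition run_sat n (r : inf_run n) (h : ltl) : Prop :=
  forall i : 'I_n, nat_of_ord i = 0 -> ltl_sat (run_obs r i) 0 h.

End Sys.

(* Main.v *)
Require Import Defs.
From mathcomp Require Import all_boot.
From Stdlib Require Import Classical.
Set Implicit Arguments. Unset Strict Implicit. Unset Printing Implicit Defensive.
Set Bullet Behavior "Strict Subproofs".

Section Constr.
Variable T : templates.
Hypothesis hconj : conjunctive T.
Variable n : nat.
Variable r : inf_run T n.
Variable i0 : 'I_n.
Hypothesis hrun : is_inf_run r.
Hypothesis hfair : forall p, moves_inf_often r p.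
Hypothesis hinit : initializing r.

Definition sI t := (rs r t).2 i0.
Definition cm t : bool := (rp r t == Some i0) && (sI t == initB T).
Fixpoint own t := if t is u.+1 then own u (+) cm u else true.
Definition wd (j : 'I_n) : 'I_n.+1 := widen_ord (leqnSn n) j.
Definition X : 'I_n.+1 := wd i0.
Definition Y : 'I_n.+1 := ord_max.
Definition f (j : 'I_n.+1) : 'I_n := insubd i0 (val j).
Definition idle t (j : 'I_n.+1) : bool := ((j == X) && ~~ own t) || ((j == Y) && own t).
Definition s' t : gstate T n.+1 :=
  ((rs r t).1, [ffun j => if idle t j then initB T else (rs r t).2 (f j)]).
Definition mover t : 'I_n.+1 := if own t.+1 then X else Y.
Definition rp' t : proc n.+1 :=
  match rp r t with None => None | Some j => Some (if j == i0 then mover t else wd j) end.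

Lemma fW j : f (wd j) = j.
Proof. by apply: val_inj; rewrite /f /= insubdK //; exact: ltn_ord. Qed.
Lemma fX : f X = i0. Proof. exact: fW. Qed.
Lemma fY : f Y = i0.
Proof. by apply: val_inj; rewrite /f val_insubd /= ltnn. Qed.
Lemma XY : (X == Y) = false.
Proof. by apply/negbTE; rewrite -val_eqE /= neq_ltn ltn_ord. Qed.
Lemma YX : (Y == X) = false.
Proof. by rewrite eq_sym XY. Qed.
Lemma WY j : (wd j == Y) = false.
Proof. by apply/negbTE; rewrite -val_eqE /= neq_ltn ltn_ord. Qed.
Lemma YW j : (Y == wd j) = false.
Proof. by rewrite eq_sym WY. Qed.
Lemma WX j : j != i0 -> (wd j == X) = false.
Proof. by move=> H; apply/negbTE; rewrite -val_eqE /= val_eqE. Qed.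
Lemma XW j : j != i0 -> (X == wd j) = false.
Proof. by move=> H; rewrite eq_sym WX. Qed.
Lemma WW j k : (wd j == wd k) = (j == k).
Proof. by rewrite -val_eqE /= val_eqE. Qed.

Lemma kcase k : k = X \/ k = Y \/ exists2 j, j != i0 & k = wd j.
Proof.
case: (eqVneq k X) => [->|hX]; first by left.
case: (eqVneq k Y) => [->|hY]; first by right; left.
have Hk : val k < n by move: (ltn_ord k) hY; rewrite ltnS leq_eqVlt -val_eqE /= => /orP [->|].
have Ek : k = wd (f k) by apply: val_inj; rewrite /= /f val_insubd Hk.
right; right; exists (f k) => //.
by apply/eqP => E; move: hX; rewrite Ek E eqxx.
Qed.

Lemma idleX t : idle t X = ~~ own t. Proof. by rewrite /idle eqxx XY /= orbF. Qed.
Lemma idleY t : idle t Y = own t. Proof. by rewrite /idle eqxx YX. Qed.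
Lemma idleW t j : j != i0 -> idle t (wd j) = false.
Proof. by move=> H; rewrite /idle WX // WY. Qed.


Lemma s'X t : (s' t).2 X = if own t then sI t else initB T.
Proof. by rewrite /s' /= ffunE idleX fX; case: own. Qed.
Lemma s'Y t : (s' t).2 Y = if own t then initB T else sI t.
Proof. by rewrite /s' /= ffunE idleY fY; case: own. Qed.
Lemma s'W t j : j != i0 -> (s' t).2 (wd j) = (rs r t).2 j.
Proof. by move=> H; rewrite /s' /= ffunE idleW // fW. Qed.

Lemma ownS t : own t.+1 = own t (+) cm t. Proof. by []. Qed.

Lemma step' (e' : nat -> ginput T n.+1) :
  (forall t, (e' t).1 = (re r t).1) ->
  (forall t k, rp' t = Some k -> (e' t).2 k = (re r t).2 (f k)) ->
  forall t, step (s' t) (e' t) (rp' t) (s' t.+1).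
Proof.
move=> He1 He2 t.
have hs := (proj1 (proj2 hrun)) t.
move: (He2 t) hs; rewrite /rp'; case Hr: (rp r t) => [j|] He hs /=.
- case: (eqVneq j i0) => [Ej|Hj].
  + subst j; rewrite eqxx in He *.
    have hc : cm t = (sI t == initB T) by rewrite /cm Hr eqxx.
    move: hs He => /= [q [sg [g [q' [Htr [Hq [Hsg [Hg Hs]]]]]]]].
    have [cA cB] := hconj.2 _ _ _ _ Htr.
    rewrite /mover ownS hc.
    case Ho: (own t); case Hc: (sI t == initB T) => /= He;
      exists q, sg, g, q'; (split; first done).
    all: split; [rewrite ffunE ?idleX ?idleY ?fX ?fY Ho -Hq //=; by move: Hc; rewrite /sI => /eqP -> | ].
    all: split; [by rewrite He // ?fX ?fY | ].
    all: split; [move=> [k|] Hk /=; [ rewrite ffunE | by apply: (Hg None) ] | ].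
    all: try (have [Ek|[Ek|[j' Hj' Ek]]] := kcase k; subst k; [ rewrite idleX fX Ho /= | rewrite idleY fY Ho /=
             | rewrite (idleW _ Hj') fW /=; apply: (Hg (Some j')); move=> [E]; move: Hj'; by rewrite E eqxx ];
             try (by []); try (by move: Hc; rewrite /sI => /eqP ->); try (by exfalso; apply: Hk)).
    all: rewrite /s' Hs /=; congr pair; apply/ffunP => k; rewrite !ffunE.
    all: have [->|[->|[j' Hj' ->]]] := kcase k; rewrite ?idleX ?idleY ?fX ?fY ?fW ?ownS ?hc ?Ho ?Hc ?eqxx ?XY ?YX /=.
    all: try by [].
    all: try (by move: Hc; rewrite /sI => /eqP ->).
    all: by rewrite !(idleW _ Hj') ?(WX Hj') ?WY (negbTE Hj').
  + rewrite (negbTE Hj) in He.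
    have hc : cm t = false by apply/negbTE; rewrite /cm Hr; apply/nandP; left; apply/eqP => -[E]; rewrite E eqxx in Hj.
    move: hs => /= [q [sg [g [q' [Htr [Hq [Hsg [Hg Hs]]]]]]]].
    have [cA cB] := hconj.2 _ _ _ _ Htr.
    exists q, sg, g, q'; split; first done.
    split; first by rewrite ffunE (idleW _ Hj) fW.
    split; first by rewrite He // fW.
    split.
    * move=> [k|] Hk /=; [rewrite ffunE | by apply: (Hg None)].
      have [Ek|[Ek|[j' Hj' Ek]]] := kcase k; subst k.
      -- rewrite idleX fX; case: (own t) => //=; apply: (Hg (Some i0)) => [[E]]; move: Hj; by rewrite E eqxx.
      -- rewrite idleY fY; case: (own t) => //=; apply: (Hg (Some i0)) => [[E]]; move: Hj; by rewrite E eqxx.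
      -- rewrite (idleW _ Hj') fW; apply: (Hg (Some j')) => [[E]]; apply: Hk; by rewrite E.
    * rewrite /s' Hs /=; congr pair; apply/ffunP => k; rewrite !ffunE.
      have [Ek|[Ek|[j' Hj' Ek]]] := kcase k; subst k.
      -- by rewrite !idleX ownS hc addbF fX eq_sym (negbTE Hj) (XW Hj).
      -- by rewrite !idleY ownS hc addbF fY eq_sym (negbTE Hj) YW.
      -- by rewrite !(idleW _ Hj') fW WW.
- move: hs => /= [q [sg [g [q' [Htr [Hq [Hsg [Hg Hs]]]]]]]].
  have [cA cB] := hconj.1 _ _ _ _ Htr.
  exists q, sg, g, q'; split; first done.
  split; first done.
  split; first by rewrite He1.
  split.
  + move=> [k|] Hk //=; rewrite ffunE; case: ifP => _; first done.
    by apply: (Hg (Some (f k))).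
  + rewrite /s' Hs /=; congr pair; apply/ffunP => k; rewrite !ffunE.
    by rewrite /idle ownS /cm Hr /= addbF.
Qed.

Lemma s'0 : s' 0 = init_state T n.+1.
Proof.
rewrite /s' (proj1 hrun) /init_state /=; congr pair; apply/ffunP => k.
by rewrite !ffunE; case: ifP.
Qed.

Lemma sI_frame t : rp r t <> Some i0 -> sI t.+1 = sI t.
Proof.
have := (proj1 (proj2 hrun)) t; rewrite /sI; case Hr: (rp r t) => [j|] /= H Hne.
- move: H => [q [sg [g [q' [_ [_ [_ [_ ->]]]]]]]] /=; rewrite ffunE.
  case: eqP => // E; subst; contradiction.
- by move: H => [q [sg [g [q' [_ [_ [_ [_ ->]]]]]]]].
Qed.

Lemma init_moves t : exists u, t <= u /\ cm u.
Proof.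
have [t1 [Ht1 Hl]] := hinit (hfair (Some i0)) t.
have Hs1 : sI t1 = initB T by case: Hl.
apply: NNPP => Hno.
have Hall : forall k, sI (t1 + k) = initB T.
{ elim=> [|k IH]; first by rewrite addn0.
  rewrite addnS; case: (eqVneq (rp r (t1 + k)) (Some i0)) => E.
  - exfalso; apply: Hno; exists (t1 + k); split; first exact: (leq_trans Ht1 (leq_addr _ _)).
    by rewrite /cm E IH !eqxx.
  - by rewrite sI_frame ?IH //; apply/eqP. }
have [t2 [Ht2 Hr]] := hfair (Some i0) t1.
apply: Hno; exists t2; split; first exact: (leq_trans Ht1 Ht2).
by rewrite /cm Hr eqxx -(subnKC Ht2) Hall eqxx.
Qed.

Lemma owner_moves b t : exists u, t <= u /\ cm u /\ own u.+1 = b.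
Proof.
have [u1 [Hu1 Hc1]] := init_moves t.
case E1: (own u1.+1 == b); first by exists u1; split => //; split => //; apply/eqP.
apply: NNPP => Hno.
have Hall : forall k, own (u1.+1 + k) = ~~ b.
{ elim=> [|k IH]; first by rewrite addn0; clear Hno; move: E1; case: b; case: (own _).
  rewrite addnS ownS IH; case Hc: (cm (u1.+1 + k)); last by rewrite addbF.
  exfalso; apply: Hno; exists (u1.+1 + k); split.
    by apply: (leq_trans Hu1); apply: (leq_trans (leqnSn _)); apply: leq_addr.
  by split => //; rewrite ownS IH Hc addbT negbK. }
have [u2 [Hu2 Hc2]] := init_moves u1.+1.
apply: Hno; exists u2; split; first by apply: (leq_trans Hu1); apply: (leq_trans (leqnSn _)).
by split => //; rewrite ownS Hc2 -(subnKC Hu2) Hall addbT negbK.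
Qed.

Lemma cm_rp u : cm u -> rp r u = Some i0.
Proof. by move=> /andP [/eqP]. Qed.

Lemma fair' p t : exists u, t <= u /\ rp' u = p.
Proof.
case: p => [k|].
- have [Ek|[Ek|[j' Hj' Ek]]] := kcase k; subst k.
  + have [u [Hu [Hc Ho]]] := owner_moves true t.
    by exists u; split => //; rewrite /rp' (cm_rp Hc) eqxx /mover Ho.
  + have [u [Hu [Hc Ho]]] := owner_moves false t.
    by exists u; split => //; rewrite /rp' (cm_rp Hc) eqxx /mover Ho.
  + have [u [Hu Hr]] := hfair (Some j') t.
    by exists u; split => //; rewrite /rp' Hr (negbTE Hj').
- have [u [Hu Hr]] := hfair None t.
  by exists u; split => //; rewrite /rp' Hr.
Qed.

Lemma init' p t : exists u, t <= u /\ loc (s' u) p = @linit T _ p.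
Proof.
case: p => [k|].
- have [Ek|[Ek|[j' Hj' Ek]]] := kcase k; subst k.
  + have [u [Hu Hc]] := init_moves t.
    exists u; split => //=; rewrite s'X; case: (own u) => //.
    by move: Hc => /andP [_ /eqP ->].
  + have [u [Hu Hc]] := init_moves t.
    exists u; split => //=; rewrite s'Y; case: (own u) => //.
    by move: Hc => /andP [_ /eqP ->].
  + have [u [Hu Hl]] := hinit (hfair (Some j')) t.
    by exists u; split => //=; rewrite s'W //; case: Hl => ->.
- have [u [Hu Hl]] := hinit (hfair None) t.
  by exists u; split.
Qed.

Lemma ex_nm j t : exists u, (t <= u) && (rp' u == Some j).
Proof. have [u [Hu Hr]] := fair' (Some j) t; exists u; by rewrite Hu Hr eqxx. Qed.

Definition nm j t := ex_minn (ex_nm j t).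

Lemma nm_now j t : rp' t = Some j -> nm j t = t.
Proof.
move=> Hr; rewrite /nm; case: ex_minnP => m /andP [Hm _] Hmin.
by apply/eqP; rewrite eqn_leq Hm andbT; apply: Hmin; rewrite leqnn Hr eqxx.
Qed.

Lemma nm_step j t : rp' t <> Some j -> nm j t.+1 = nm j t.
Proof.
move=> Hr; rewrite /nm; case: ex_minnP => a /andP [Ha Pa] Hmina.
case: ex_minnP => b /andP [Hb Pb] Hminb.
apply/eqP; rewrite eqn_leq; apply/andP; split.
- apply: Hmina; rewrite Pb andbT ltn_neqAle Hb andbT; apply/eqP => E.
  by subst b; apply: Hr; apply/eqP.
- by apply: Hminb; rewrite Pa andbT (ltnW Ha).
Qed.

Definition e' t : ginput T n.+1 :=
  ((re r t).1, [ffun j => if (j == X) || (j == Y) then (re r (nm j t)).2 i0 else (re r t).2 (f j)]).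

Definition r' : inf_run T n.+1 := InfRun s' e' rp'.

Lemma e'2 t k : rp' t = Some k -> (e' t).2 k = (re r t).2 (f k).
Proof.
move=> Hr; rewrite /e' /= ffunE.
have [Ek|[Ek|[j' Hj' Ek]]] := kcase k; subst k.
- by rewrite eqxx /= nm_now // fX.
- by rewrite eqxx orbT nm_now // fY.
- by rewrite (WX Hj') WY.
Qed.

Lemma const' t p : p <> rp' t -> linp (e' t.+1) p = linp (e' t) p.
Proof.
have Hc := (proj2 (proj2 hrun)) t.
case: p => [k|] Hp.
- rewrite /= !ffunE.
  have [Ek|[Ek|[j' Hj' Ek]]] := kcase k; subst k.
  + by rewrite eqxx /= nm_step // => E; apply: Hp.
  + by rewrite eqxx orbT nm_step // => E; apply: Hp.
  + rewrite (WX Hj') WY /= fW.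
    have := Hc (Some j'); rewrite /= => -> // E.
    by apply: Hp; rewrite /rp' -E (negbTE Hj').
- have := Hc None; rewrite /= => -> // E.
  by apply: Hp; rewrite /rp' -E.
Qed.

Lemma obs' j : j != i0 -> forall t, run_obs r' (wd j) t = run_obs r j t.
Proof.
move=> Hj t; rewrite /run_obs /= s'W // /e' /= ffunE (WX Hj) WY /= fW.
by [].
Qed.

Lemma r'_ok : uncond_fair r' /\ initializing r'.
Proof.
split; last by move=> p _ t; exact: init'.
split; last by move=> p t; exact: fair'.
split; first exact: s'0.
split; first by apply: step' => //; exact: e'2.
exact: const'.
Qed.

End Constr.

Lemma ltl_sat_ext (T : templates) (w1 w2 : nat -> obs T) :
  (forall t, w1 t = w2 t) -> forall g t, ltl_sat w1 t g <-> ltl_sat w2 t g.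
Proof.
move=> H; elim=> [|a|g IH|g1 IH1 g2 IH2|g1 IH1 g2 IH2] t /=.
- by [].
- by rewrite H.
- by rewrite IH.
- by rewrite IH1 IH2.
- split=> -[k [Hk [H2 H1]]]; exists k; split => //; split.
  + by rewrite -IH2.
  + by move=> j Hj; rewrite -IH1; apply: H1.
  + by rewrite IH2.
  + by move=> j Hj; rewrite IH1; apply: H1.
Qed.

Theorem mainTheorem13 (T : templates) (hconj : conjunctive T) (h : ltl T) (n : nat) :
  2 <= n ->
  (exists r : inf_run T n, uncond_fair r /\ initializing r /\ run_sat r h) ->
  (exists r : inf_run T n.+1, uncond_fair r /\ initializing r /\ run_sat r h).
Proof.
move=> Hn [r [[hrun hfair] [hinit hsat]]].
pose i0 : 'I_n := Ordinal (Hn : 1 < n).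
exists (r' i0 hrun hfair hinit).
have [H1 H2] := r'_ok hconj i0 hrun hfair hinit.
split => //; split => //.
move=> k Hk.
have [Ek|[Ek|[j' Hj' Ek]]] := kcase i0 k; subst k.
- by move: Hk.
- exfalso; have := Hn; move: Hk => /= ->; done.
- rewrite /= in Hk.
  have := hsat j' Hk; apply: (ltl_sat_ext _ h 0 ).1.
  by move=> t; rewrite (obs' hrun hfair hinit Hj').
Qed.
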